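(* Let $m\ge1$, $n\ge1$, $N>2n$, and let $\mathbf y$ be a stationary reciprocal process of order $n$ on $\mathbb Z_N$ with conjugate process $\mathbf d(t)=\mathbf y(t)-\hat{\mathbb E}[\mathbf y(t)\mid\mathbf y(s),s\ne t]$. Then there exist constant matrices $F_{-n},\dots,F_{-1},F_1,\dots,F_n\in\mathbb R^{m\times m}$ such that, with $F_0=I_m$, $$\sum_{k=-n}^{n}F_k\,\mathbf y(t-k)=\mathbf d(t),\qquad t=1,\dots,N,$$ where the values outside $[1,N]$ are given by the cyclic boundary conditions $\mathbf y(k)=\mathbf y(N+k)$, $k=-n+1,\dots,n$. Equivalently, $\mathbf F_N\mathbf y=\mathbf d$, where $\mathbf F_N$ is the $mN\times mN$ banded block-circulant matrix whose first block column is $(I_m,F_1,\dots,F_n,0,\dots,0,F_{-n},\dots,F_{-1})$. If $\mathbf y$ is full rank, this description is unique.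
   Context: A process on $\mathbb Z_N$ is a zero-mean second-order $\mathbb R^m$-valued process $\{\mathbf y(t)\}_{t=1}^N$, time indices taken modulo $N$, whose covariance $\boldsymbol\Sigma_N=\mathbb E\,\mathbf y\mathbf y^\top$ is symmetric block-circulant (its $(i,j)$ block depends only on $(i-j)\bmod N$, so the block-circulant matrix is determined by its first block column); such a process is stationary. Full rank means $\boldsymbol\Sigma_N>0$. $\hat{\mathbb E}[\cdot\mid\cdot]$ is orthogonal projection onto the closed linear span of the scalar components of the conditioning variables. Subspaces $\mathcal A,\mathcal B$ are conditionally orthogonal given $\mathcal C$ if $a-\hat{\mathbb E}[a\mid\mathcal C]$ and $b-\hat{\mathbb E}[b\mid\mathcal C]$ are uncorrelated for all $a\in\mathcal A,b\in\mathcal B$. The process is reciprocal of order $n$ if for every cyclic interval $(t_1,t_2)$ the variables $\{\mathbf y(t):t\in(t_1,t_2)\}$ are conditionally orthogonal to $\{\mathbf y(s):s\notin(t_1,t_2)\}$ given $\mathbf y(t_1-n+1),\dots,\mathbf y(t_1),\mathbf y(t_2),\dots,\mathbf y(t_2+n-1)$. *)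

(* Defs.v *)
From HB Require Import structures.
From mathcomp Require Import all_boot all_order all_algebra.
From mathcomp Require Import all_classical all_reals all_analysis.
Set Implicit Arguments. Unset Strict Implicit. Unset Printing Implicit Defensive.
Import Order.TTheory GRing.Theory Num.Theory.
Local Open Scope ring_scope.

Section ReciprocalDefs.
Context {d0 : measure_display} {T : measurableType d0} {R : realType}.
Variable P : probability T R.

Definition rp_inner (X Y : T -> R) : R := fine ('E_P[X \* Y])%E.

Definition rp_lincomb (S : seq (T -> R)) (c : 'I_(size S) -> R) : T -> R :=
  fun w => \sum_(i < size S) c i * nth (fun _ => 0) S i w.

(* p belongs to the (finite-dimensional, hence closed) linear span of S
   (as an element of L^2, i.e. up to P-a.s. equality) *)
Definition rp_in_span (S : seq (T -> R)) (p : T -> R) : Prop :=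
  exists c : 'I_(size S) -> R, {ae P, forall w, p w = rp_lincomb c w}.

(* p is (a version of) the orthogonal projection  \hat E[x | S] *)
Definition rp_is_proj (S : seq (T -> R)) (x p : T -> R) : Prop :=
  rp_in_span S p /\
  forall i : 'I_(size S), rp_inner (x \- p) (nth (fun _ => 0) S i) = 0.

Definition rp_cond_orth (A B C : seq (T -> R)) : Prop :=
  forall (a : 'I_(size A) -> R) (b : 'I_(size B) -> R) (pa pb : T -> R),
    rp_is_proj C (rp_lincomb a) pa -> rp_is_proj C (rp_lincomb b) pb ->
    rp_inner (rp_lincomb a \- pa) (rp_lincomb b \- pb) = 0.

Variable m : nat.

Definition rp_comp (Y : T -> 'cV[R]_m) (i : 'I_m) : T -> R := fun w => Y w i 0.

Definition rp_comps (y : int -> T -> 'cV[R]_m) (ts : seq int) : seq (T -> R) :=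
  [seq rp_comp (y t) i | t <- ts, i <- enum 'I_m].

Definition rp_second_order (y : int -> T -> 'cV[R]_m) : Prop :=
  forall (t : int) (i : 'I_m),
    rp_comp (y t) i \in Lfun P 2%:E /\ ('E_P[rp_comp (y t) i] = 0)%E.

(* process on Z_N, represented as an N-rp_periodic process on Z
   (cyclic boundary conditions) *)
Definition rp_periodic (N : nat) (y : int -> T -> 'cV[R]_m) : Prop :=
  forall t : int, y (t + N%:Z) = y t.

Definition rp_Cov (y : int -> T -> 'cV[R]_m) (t s : int) : 'M[R]_m :=
  \matrix_(a, b) rp_inner (rp_comp (y t) a) (rp_comp (y s) b).

(* the covariance Sigma_N of (y(1),...,y(N)) is block-circulant *)
Definition rp_stationary (y : int -> T -> 'cV[R]_m) : Prop :=
  forall t s h : int, rp_Cov y (t + h) (s + h) = rp_Cov y t s.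

Definition rp_SigmaN (N : nat) (y : int -> T -> 'cV[R]_m) :
    'M[R]_(\sum_(i < N) m) :=
  \mxblock_(i < N, j < N) rp_Cov y (i.+1)%:Z (j.+1)%:Z.

(* rp_reciprocal of order n: for every cyclic interval (t1,t2), t2 = t1+L+1,
   interior {t1+1,..,t1+L}, exterior {t2,..,t1+N}, boundary
   {t1-n+1,..,t1} u {t2,..,t2+n-1} *)
Definition rp_reciprocal (n N : nat) (y : int -> T -> 'cV[R]_m) : Prop :=
  forall (t1 : int) (L : nat), (L.+1 < N)%N ->
    rp_cond_orth
      (rp_comps y [seq t1 + (i.+1)%:Z | i <- iota 0 L])
      (rp_comps y [seq t1 + (L.+1 + i)%:Z | i <- iota 0 (N - L)])
      (rp_comps y ([seq t1 - i%:Z | i <- iota 0 n] ++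
                [seq t1 + (L.+1 + i)%:Z | i <- iota 0 n])).

Definition rp_conjugate (N : nat) (y d : int -> T -> 'cV[R]_m) : Prop :=
  forall (t : int) (i : 'I_m),
    rp_is_proj (rp_comps y [seq t + (j.+1)%:Z | j <- iota 0 N.-1])
      (rp_comp (y t) i) (rp_comp (y t) i \- rp_comp (d t) i).

Definition two_sided_AR (n N : nat) (y d : int -> T -> 'cV[R]_m)
    (F : int -> 'M[R]_m) : Prop :=
  forall t : int, 1 <= t <= N%:Z ->
    {ae P, forall w,
      \sum_(k < (2 * n).+1) F (k%:Z - n%:Z) *m y (t - (k%:Z - n%:Z)) w
      = d t w}.

End ReciprocalDefs.

Definition rp_posdef {R : realType} (k : nat) (A : 'M[R]_k) : Prop :=
  forall x : 'rV[R]_k, x != 0 -> 0 < (x *m A *m x^T) 0 0.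

(* Main.v *)
Require Import Defs.
From HB Require Import structures.
From mathcomp Require Import all_boot all_order all_algebra.
From mathcomp Require Import all_classical all_reals all_analysis.
From mathcomp Require Import ring lra zify.
Import Order.TTheory GRing.Theory Num.Theory.
Local Open Scope ring_scope.
Local Open Scope classical_set_scope.

Section AE.
Context {d0 : measure_display} {T : measurableType d0} {R : realType}.
Variable P : probability T R.
Import HBNNSimple.

Lemma nnint_ae_le (F G : T -> \bar R) : (forall x, 0 <= F x)%E -> (forall x, 0 <= G x)%E ->
  {ae P, forall x, F x = G x} -> (\int[P]_x F x <= \int[P]_x G x)%E.
Proof.
move=> F0 G0 [N [mN PN sub]].
rewrite (ge0_integralTE _ F0) (ge0_integralTE _ G0) /=.
apply: ge_ereal_sup => _ [h hF <-].
have mA : measurable (~` N) := measurableC mN.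
pose h' := mul_nnsfun h (indic_nnsfun R mA).
apply: (@le_trans _ _ (sintegral P h')).
  rewrite -!integralT_nnsfun le_eqVlt; apply/orP; left; apply/eqP.
  apply: ae_eq_integral => //.
  - by apply/measurable_realfun.measurable_EFinP; exact: measurable_funP.
  - by apply/measurable_realfun.measurable_EFinP; exact: measurable_funP.
  exists N; split => // x /= hx; apply: contra_notP hx => Nx _.
  by rewrite /h' /= measurable_realfun.mindicE mem_set // mulr1.
apply: ereal_sup_ubound; exists h' => //= x.
rewrite /h' /= measurable_realfun.mindicE; case: (boolP (x \in ~` N)) => xN.
  rewrite mulr1; rewrite (le_trans (hF x)) //.
  have : F x = G x.
    by apply: contra_notP (set_mem xN) => ne; exact: sub.
  by move=> ->.
by rewrite mulr0 G0.
Qed.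

Lemma expectation_ae (f g : T -> R) : {ae P, forall w, f w = g w} ->
  ('E_P[f] = 'E_P[g])%E.
Proof.
move=> fg; rewrite unlock integralE [RHS]integralE; congr (_ - _)%E.
  apply/eqP; rewrite eq_le; apply/andP; split; apply: nnint_ae_le => //;
    try (by move=> x; exact: funepos_ge0);
    by apply: filterS fg => w /= fgw; rewrite !funeposE /= fgw.
apply/eqP; rewrite eq_le; apply/andP; split; apply: nnint_ae_le => //;
  try (by move=> x; exact: funeneg_ge0);
  by apply: filterS fg => w /= fgw; rewrite !funenegE /= fgw.
Qed.


Notation L2 := (Lfun P 2%:E).

Lemma inner_sym X Y : rp_inner P X Y = rp_inner P Y X.
Proof. by rewrite /rp_inner; congr (fine 'E_P[_])%E; apply/funext => w; exact: mulrC. Qed.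

Lemma inner_ae X X' Y : {ae P, forall w, X w = X' w} -> rp_inner P X Y = rp_inner P X' Y.
Proof.
move=> H; rewrite /rp_inner (@expectation_ae (X \* Y) (X' \* Y)) //.
by apply: filterS H => w /= ->.
Qed.

Lemma L2_lin a X Z : X \in L2 -> Z \in L2 -> (fun w => a * X w + Z w) \in L2.
Proof.
move=> HX HZ.
have -> : (fun w => a * X w + Z w) = (a \o* X) + Z.
  by apply/funext => w; rewrite addrfctE /= mulrC.
have H1 : a \o* X \in L2.
  by have := @Lfun_scale _ _ _ P X a 2; apply => //; rewrite ler1n.
by rewrite rpredD //; exact: lee1n.
Qed.

Lemma inner_addl a X Z Y : X \in L2 -> Z \in L2 -> Y \in L2 ->
  rp_inner P (fun w => a * X w + Z w) Y = a * rp_inner P X Y + rp_inner P Z Y.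
Proof.
move=> HX HZ HY; rewrite /rp_inner.
have -> : ((fun w => a * X w + Z w) \* Y) = (a \o* (X \* Y)) \+ (Z \* Y).
  by apply/funext => w /=; rewrite mulrDl -mulrA [a * _]mulrC.
have h1 := Lfun2_mul_Lfun1 HX HY.
have h2 := Lfun2_mul_Lfun1 HZ HY.
rewrite expectationD //; last by apply: Lfun_scale.
rewrite expectationZl // fineD //; last 2 first.
- by rewrite fin_numM // expectation_fin_num.
- exact: expectation_fin_num.
by rewrite fineM // expectation_fin_num.
Qed.


Lemma inner_subl X Z Y : X \in L2 -> Z \in L2 -> Y \in L2 ->
  rp_inner P (fun w => X w - Z w) Y = rp_inner P X Y - rp_inner P Z Y.
Proof.
move=> HX HZ HY.
have -> : (fun w => X w - Z w) = (fun w => -1 * Z w + X w).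
  by apply/funext => w; rewrite mulN1r addrC.
by rewrite inner_addl // mulN1r addrC.
Qed.

Lemma inner0l Y : rp_inner P (fun _ => 0) Y = 0.
Proof.
rewrite /rp_inner.
have -> : ((fun _ : T => 0 : R) \* Y) = cst 0 by apply/funext => w /=; rewrite mul0r.
by rewrite expectation_cst.
Qed.

Lemma L2_0 : (fun _ : T => 0 : R) \in L2.
Proof. by have := @Lfun_cst _ _ _ P 0 2. Qed.

Lemma L2_sum (I : Type) (r : seq I) (a : I -> R) (F : I -> T -> R) :
  (forall i, F i \in L2) -> (fun w => \sum_(i <- r) a i * F i w) \in L2.
Proof.
move=> HF; elim: r => [|i r IH].
  by under eq_fun do rewrite big_nil; exact: L2_0.
under eq_fun do rewrite big_cons.
exact: L2_lin.
Qed.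

Lemma inner_sum (I : Type) (r : seq I) (a : I -> R) (F : I -> T -> R) Y :
  (forall i, F i \in L2) -> Y \in L2 ->
  rp_inner P (fun w => \sum_(i <- r) a i * F i w) Y =
  \sum_(i <- r) a i * rp_inner P (F i) Y.
Proof.
move=> HF HY; elim: r => [|i r IH].
  by under eq_fun do rewrite big_nil; rewrite big_nil inner0l.
under eq_fun do rewrite big_cons.
by rewrite inner_addl // ?IH ?big_cons //; exact: L2_sum.
Qed.

Lemma inner_self0 X : X \in L2 -> rp_inner P X X = 0 -> {ae P, forall w, X w = 0}.
Proof.
move=> HX H0.
have h1 := Lfun2_mul_Lfun1 HX HX.
have hf := expectation_fin_num h1.
have E0 : ('E_P[X \* X] = 0)%E.
  by move: H0; rewrite /rp_inner => H0; rewrite -[LHS]fineK // H0.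
move: h1 => /Lfun1_integrable /integrableP [mf _].
have : (\int[P]_(x in setT) `|(X x * X x)%:E| = 0)%E.
  rewrite -E0 unlock; apply: eq_integral => x _ /=.
  by rewrite ger0_norm // -expr2 sqr_ge0.
move/(ae_eq_integral_abs _ measurableT mf) => H.
apply: filterS H => w /= /(_ I) /eqP; rewrite eqe mulf_eq0 orbb => /eqP //.
Qed.


Lemma inner_sumr (I : Type) (r : seq I) (a : I -> R) (F : I -> T -> R) Y :
  (forall i, F i \in L2) -> Y \in L2 ->
  rp_inner P Y (fun w => \sum_(i <- r) a i * F i w) =
  \sum_(i <- r) a i * rp_inner P Y (F i).
Proof.
move=> HF HY; rewrite inner_sym inner_sum //.
by apply: eq_bigr => i _; rewrite inner_sym.
Qed.

Lemma proj_exists (S : seq (T -> R)) (x : T -> R) :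
  (forall i : 'I_(size S), nth (fun _ => 0) S i \in L2) -> x \in L2 ->
  exists c : 'I_(size S) -> R, forall i : 'I_(size S),
    rp_inner P (fun w => x w - rp_lincomb c w) (nth (fun _ => 0) S i) = 0.
Proof.
move=> HS Hx.
set k := size S in HS *.
pose Sf (i : 'I_k) := nth (fun _ => 0) S i.
have HSf : forall i, Sf i \in L2 := HS.
pose G : 'M[R]_k := \matrix_(i, j) rp_inner P (Sf i) (Sf j).
pose b : 'rV[R]_k := \row_i rp_inner P x (Sf i).
have Hv : forall v : 'cV[R]_k, G *m v = 0 -> b *m v = 0.
  move=> v Gv.
  pose z := fun w => \sum_(l < k) v l 0 * Sf l w.
  have Hz : z \in L2 by apply: L2_sum.
  have Sz : forall i, rp_inner P (Sf i) z = 0.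
    move=> i; have := congr1 (fun M : 'M[R]_(k,1) => M i 0) Gv; rewrite !mxE => <-.
    rewrite inner_sumr //; apply: eq_bigr => l _; rewrite mxE mulrC.
    by [].
  have zz : rp_inner P z z = 0.
    rewrite {1}/z inner_sum //; apply: big1 => l _.
    by rewrite Sz mulr0.
  have /inner_self0 zae := zz.
  have xz : rp_inner P x z = 0.
    rewrite inner_sym (@inner_ae z (fun _ => 0) x (zae Hz)); exact: inner0l.
  apply/matrixP => i j; rewrite (ord1 i) (ord1 j) [RHS]mxE -[RHS]xz /z inner_sumr //.
  rewrite !mxE; apply: eq_bigr => l _; rewrite mxE mulrC.
  by [].
have bG : (b <= G)%MS.
  rewrite submxE; apply/eqP/matrixP => i j.
  have Cv : G *m col j (cokermx G) = 0.
    apply/matrixP => p q; rewrite [RHS]mxE.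
    rewrite -[RHS](_ : (G *m cokermx G) p j = 0); last by rewrite mulmx_coker mxE.
    by rewrite !mxE; apply: eq_bigr => l _; rewrite !mxE.
  rewrite [RHS]mxE -[RHS](_ : (b *m col j (cokermx G)) i 0 = 0); last by rewrite Hv // mxE.
  by rewrite !mxE; apply: eq_bigr => l _; rewrite !mxE.
case/submxP: bG => D bD.
exists (fun i => D 0 i) => i.
rewrite inner_subl //; last exact: L2_sum.
rewrite /rp_lincomb inner_sum //.
have := congr1 (fun M : 'M[R]_(1,k) => M 0 i) bD; rewrite !mxE => ->.
apply/eqP; rewrite subr_eq0; apply/eqP; apply: eq_bigr => l _; rewrite mxE.
by [].
Qed.


Lemma L2_lincomb (S : seq (T -> R)) (c : 'I_(size S) -> R) :
  (forall i : 'I_(size S), nth (fun _ => 0) S i \in L2) -> rp_lincomb c \in L2.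
Proof. by move=> HS; apply: L2_sum. Qed.

Lemma proj_unique (S : seq (T -> R)) (x p1 p2 : T -> R) :
  (forall i : 'I_(size S), nth (fun _ => 0) S i \in L2) -> x \in L2 ->
  rp_is_proj P S x p1 -> rp_is_proj P S x p2 -> {ae P, forall w, p1 w = p2 w}.
Proof.
move=> HS Hx [[c1 H1] O1] [[c2 H2] O2].
set l1 := rp_lincomb c1; set l2 := rp_lincomb c2.
have L1 : l1 \in L2 by apply: L2_lincomb.
have L2' : l2 \in L2 by apply: L2_lincomb.
have O1' : forall i : 'I_(size S), rp_inner P (fun w => x w - l1 w) (nth (fun _ => 0) S i) = 0.
  move=> i; rewrite -[RHS](O1 i); apply: inner_ae; apply: filterS H1 => w /= ->.
  by [].
have O2' : forall i : 'I_(size S), rp_inner P (fun w => x w - l2 w) (nth (fun _ => 0) S i) = 0.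
  move=> i; rewrite -[RHS](O2 i); apply: inner_ae; apply: filterS H2 => w /= ->.
  by [].
pose z := fun w => l2 w - l1 w.
have Lz : z \in L2.
  have -> : z = (fun w => -1 * l1 w + l2 w).
    by apply/funext => w; rewrite /z mulN1r addrC.
  exact: L2_lin.
have Oz : forall i : 'I_(size S), rp_inner P z (nth (fun _ => 0) S i) = 0.
  move=> i; move: (O1' i) (O2' i).
  rewrite /z !inner_subl // => /eqP; rewrite subr_eq0 => /eqP ->.
  by move=> /eqP; rewrite subr_eq0 => /eqP ->; rewrite subrr.
have zz : rp_inner P z z = 0.
  rewrite {2}/z.
  rewrite inner_sym inner_subl // inner_sym [rp_inner P l1 z]inner_sym.
  rewrite /l1 /l2 /rp_lincomb !inner_sumr //.
  by rewrite !big1 ?subrr // => k _; rewrite Oz mulr0.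
have Hz := @inner_self0 z Lz zz.
apply: (filterS3 _ _ H1 H2 Hz) => w -> ->; rewrite /z => /eqP.
by rewrite /l1 /l2 subr_eq0 => /eqP ->.
Qed.

Lemma lincomb_unit (S : seq (T -> R)) (k : 'I_(size S)) :
  rp_lincomb (fun l : 'I_(size S) => (l == k)%:R) = nth (fun _ => 0) S k.
Proof.
apply/funext => w; rewrite /rp_lincomb (bigD1 k) //= eqxx mul1r big1 ?addr0 //.
by move=> l /negbTE ->; rewrite mul0r.
Qed.

Lemma span_sub (S1 S2 : seq (T -> R)) (p : T -> R) :
  (forall k : 'I_(size S1), exists k' : 'I_(size S2),
      nth (fun _ => 0) S1 k = nth (fun _ => 0) S2 k') ->
  rp_in_span P S1 p -> rp_in_span P S2 p.
Proof.
move=> /choice [sg Hsg] [c Hc].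
exists (fun k' => \sum_(k < size S1 | sg k == k') c k).
apply: filterS Hc => w ->; rewrite /rp_lincomb.
rewrite (partition_big sg xpredT) //=.
apply: eq_bigr => k' _; rewrite mulr_suml; apply: eq_bigr => k /eqP <-.
by rewrite Hsg.
Qed.

End AE.

Section Lists.
Context {d0 : measure_display} {T : measurableType d0} {R : realType}.
Variable P : probability T R.
Variables (m n N : nat) (y : int -> T -> 'cV[R]_m).
Hypothesis hm : (0 < m)%N.

Definition x0 : int * 'I_m := (0, Ordinal hm).
Definition prs (ts : seq int) := [seq (u, j) | u <- ts, j <- enum 'I_m].
Definition bl (t : int) := [seq (t - 1) - i%:Z | i <- iota 0 n] ++
                           [seq (t - 1) + (1.+1 + i)%:Z | i <- iota 0 n].
Definition P0 := prs (bl 0).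
Definition K := size P0.
Definition off k := (nth x0 P0 k).1.
Definition jj k := (nth x0 P0 k).2.

Lemma comps_map ts : rp_comps y ts = map (fun p => rp_comp (y p.1) p.2) (prs ts).
Proof. by rewrite /rp_comps /prs map_allpairs. Qed.

Lemma bl_shift t : bl t = map (fun u => u + t) (bl 0).
Proof.
rewrite /bl map_cat -!map_comp; congr (_ ++ _); apply: eq_map => i /=; lia.
Qed.

Lemma prs_shift t : prs (bl t) = map (fun p => (p.1 + t, p.2)) P0.
Proof. by rewrite /P0 {1}bl_shift /prs allpairs_mapl map_allpairs. Qed.

Lemma size_Bt t : size (rp_comps y (bl t)) = K.
Proof. by rewrite comps_map size_map prs_shift size_map. Qed.

Lemma nth_Bt t k : (k < K)%N ->
  nth (fun _ => 0) (rp_comps y (bl t)) k = rp_comp (y (off k + t)) (jj k).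
Proof.
move=> hk; rewrite comps_map (nth_map x0); last by rewrite prs_shift size_map.
by rewrite prs_shift (nth_map x0).
Qed.


Lemma mem_prs ts u j : ((u, j) \in prs ts) = (u \in ts).
Proof.
apply/idP/idP.
  by case/allpairsP => -[u' j'] /= [hu _ [-> _]].
by move=> hu; apply/allpairsP; exists (u, j) => /=; rewrite mem_enum.
Qed.

Lemma off_mem k : (k < K)%N -> off k \in bl 0.
Proof.
move=> hk; rewrite /off -(mem_prs (bl 0) _ (jj k)) /jj -surjective_pairing.
exact: mem_nth.
Qed.

Lemma bl0_prop u : u \in bl 0 -> u != 0 /\ - n%:Z <= u <= n%:Z.
Proof.
rewrite mem_cat => /orP[] /mapP [i]; rewrite mem_iota => /andP [_ hi] ->;
  split; try (apply/eqP; lia); apply/andP; split; lia.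
Qed.

Lemma bl_in_C t u : (2 * n < N)%N -> u \in bl t ->
  exists2 j, (j < N.-1)%N & (u = t + (j.+1)%:Z \/ u + N%:Z = t + (j.+1)%:Z).
Proof.
move=> hN; rewrite mem_cat => /orP[] /mapP [i]; rewrite mem_iota => /andP [_ hi] ->.
  exists (N - 2 - i)%N; first lia.
  by right; lia.
exists i; first lia.
by left; lia.
Qed.


Notation L2 := (Lfun P 2%:E).
Variable d : int -> T -> 'cV[R]_m.
Hypotheses (hn : (0 < n)%N) (hN : (2 * n < N)%N).
Hypotheses (Hso : rp_second_order P y) (Hper : rp_periodic N y)
  (Hst : rp_stationary P y) (Hrec : rp_reciprocal P n N y)
  (Hconj : rp_conjugate P N y d).

Lemma Lcomp u j : rp_comp (y u) j \in L2.
Proof. exact: (Hso u j).1. Qed.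

Lemma L2_comps ts k : nth (fun _ => 0) (rp_comps y ts) k \in L2.
Proof.
rewrite comps_map; case: (ltnP k (size (prs ts))) => hk.
  by rewrite (nth_map x0) //; exact: Lcomp.
by rewrite nth_default ?size_map //; exact: L2_0.
Qed.

Lemma L2_sub X Z : X \in L2 -> Z \in L2 -> (X \- Z) \in L2.
Proof.
move=> HX HZ; have -> : X \- Z = (fun w => -1 * Z w + X w).
  by apply/funext => w /=; rewrite mulN1r addrC.
exact: L2_lin.
Qed.

Lemma ex_c : exists c : 'I_m -> 'I_(size (rp_comps y (bl 0))) -> R,
  forall i (k : 'I_(size (rp_comps y (bl 0)))), rp_inner P (fun w => rp_comp (y 0) i w - rp_lincomb (c i) w)
                (nth (fun _ => 0) (rp_comps y (bl 0)) k) = 0.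
Proof.
suff H : forall i, exists c : 'I_(size (rp_comps y (bl 0))) -> R, forall k : 'I_(size (rp_comps y (bl 0))),
  rp_inner P (fun w => rp_comp (y 0) i w - rp_lincomb c w)
                (nth (fun _ => 0) (rp_comps y (bl 0)) k) = 0.
  by have [f Hf] := choice H; exists f.
move=> i; by apply: proj_exists => // [k|]; [exact: L2_comps | exact: Lcomp].
Qed.

Variable c : 'I_m -> 'I_(size (rp_comps y (bl 0))) -> R.
Hypothesis Hc : forall i (k : 'I_(size (rp_comps y (bl 0)))), rp_inner P (fun w => rp_comp (y 0) i w - rp_lincomb (c i) w)
                (nth (fun _ => 0) (rp_comps y (bl 0)) k) = 0.

Definition cc i k := oapp (c i) 0 (insub k).
Definition q t i := fun w => \sum_(k < K) cc i k * rp_comp (y (off k + t)) (jj k) w.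

Lemma q_lincomb t i : q t i = rp_lincomb (S := rp_comps y (bl t)) (fun k => cc i k).
Proof.
apply/funext => w; rewrite /q /rp_lincomb.
rewrite -(big_mkord xpredT (fun k => cc i k * rp_comp (y (off k + t)) (jj k) w)).
rewrite -(big_mkord xpredT (fun k => cc i k * nth (fun _ => 0) (rp_comps y (bl t)) k w)).
rewrite size_Bt; apply: eq_big_nat => k /andP [_ hk].
by rewrite nth_Bt.
Qed.

Lemma q0 i : q 0 i = rp_lincomb (c i).
Proof.
rewrite q_lincomb; apply/funext => w; rewrite /rp_lincomb; apply: eq_bigr => k _.
by rewrite /cc valK.
Qed.

Lemma L2_q t i : q t i \in L2.
Proof. by apply: L2_sum => k; exact: Lcomp. Qed.

Lemma inner_comp u v a b :
  rp_inner P (rp_comp (y u) a) (rp_comp (y v) b) = rp_Cov P y u v a b.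
Proof. by rewrite /rp_Cov mxE. Qed.

Lemma q_expand t i k :
  rp_inner P (fun w => rp_comp (y t) i w - q t i w) (rp_comp (y (off k + t)) (jj k)) =
  rp_Cov P y 0 (off k) i (jj k) -
    \sum_(l < K) cc i l * rp_Cov P y (off l) (off k) (jj l) (jj k).
Proof.
rewrite inner_subl //; [|exact: Lcomp|exact: L2_q|exact: Lcomp].
rewrite /q inner_sum //; last exact: Lcomp.
rewrite inner_comp -{1}(add0r t) Hst; congr (_ - _); apply: eq_bigr => l _.
  by rewrite inner_comp Hst.
by move=> l; exact: Lcomp.
Qed.

Lemma q_orth t i k : (k < K)%N ->
  rp_inner P (fun w => rp_comp (y t) i w - q t i w) (rp_comp (y (off k + t)) (jj k)) = 0.
Proof.
move=> hk; rewrite q_expand -(q_expand 0) -(@nth_Bt 0 k hk) q0.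
have hk' : (k < size (rp_comps y (bl 0)))%N by rewrite size_Bt.
exact: (Hc i (Ordinal hk')).
Qed.

Lemma q_projB t i : rp_is_proj P (rp_comps y (bl t)) (rp_comp (y t) i) (q t i).
Proof.
split.
  by exists (fun k => cc i k); apply: nearW => w; rewrite q_lincomb.
move=> k; have hk : (k < K)%N by rewrite -(size_Bt t).
rewrite nth_Bt // -(@q_orth t i k hk).
by [].
Qed.


Definition Clist (t : int) := [seq t + (j.+1)%:Z | j <- iota 0 N.-1].

Lemma inner_subr X Y Z : X \in L2 -> Y \in L2 -> Z \in L2 ->
  rp_inner P X (fun w => Y w - Z w) = rp_inner P X Y - rp_inner P X Z.
Proof.
by move=> HX HY HZ; rewrite inner_sym inner_subl // (inner_sym P Y) (inner_sym P Z).
Qed.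

Lemma size_comps1 t : size (rp_comps y [:: t]) = m.
Proof. by rewrite comps_map size_map /prs size_allpairs /= size_enum_ord mul1n. Qed.

Lemma nth_comps1 t (i : 'I_m) : nth (fun _ => 0) (rp_comps y [:: t]) i = rp_comp (y t) i.
Proof.
rewrite comps_map (nth_map x0); last by rewrite /prs size_allpairs /= size_enum_ord mul1n.
by rewrite /prs /= cats0 (nth_map (Ordinal hm)) ?size_enum_ord // nth_ord_enum.
Qed.

Lemma q_orthE t i : forall k : 'I_(size (rp_comps y (Clist t))),
  rp_inner P (rp_comp (y t) i \- q t i) (nth (fun _ => 0) (rp_comps y (Clist t)) k) = 0.
Proof.
have h2 : (1.+1 < N)%N by lia.
have HR : rp_cond_orth P (rp_comps y [:: t]) (rp_comps y (Clist t)) (rp_comps y (bl t)).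
  have EA : [seq (t-1) + (i.+1)%:Z | i <- iota 0 1] = [:: t].
    by rewrite /=; congr [:: _]; lia.
  have EE : [seq (t-1) + (1.+1 + i)%:Z | i <- iota 0 (N - 1)] = Clist t.
    by rewrite /Clist subn1; apply: eq_map => j; lia.
  by rewrite -EA -EE; exact: Hrec.
move=> k.
have hi : (i < size (rp_comps y [:: t]))%N by rewrite size_comps1.
pose ia : 'I_(size (rp_comps y [:: t])) := Ordinal hi.
have eA : rp_lincomb (fun l : 'I_(size (rp_comps y [:: t])) => (l == ia)%:R) = rp_comp (y t) i.
  by rewrite lincomb_unit nth_comps1.
have [cb Hcb] := @proj_exists _ _ _ P (rp_comps y (bl t)) (nth (fun _ => 0) (rp_comps y (Clist t)) k)
  (fun l => L2_comps _ l) (L2_comps _ k).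
have projA : rp_is_proj P (rp_comps y (bl t))
   (rp_lincomb (fun l : 'I_(size (rp_comps y [:: t])) => (l == ia)%:R)) (q t i).
  by rewrite eA; exact: q_projB.
have projB : rp_is_proj P (rp_comps y (bl t))
   (rp_lincomb (fun l : 'I_(size (rp_comps y (Clist t))) => (l == k)%:R)) (rp_lincomb cb).
  rewrite lincomb_unit; split; last exact: Hcb.
  by exists cb; apply: nearW.
have := HR _ _ _ _ projA projB.
rewrite eA lincomb_unit => H; rewrite -[RHS]H.
have Le : (rp_comp (y t) i \- q t i) \in L2 by apply: L2_sub; [exact: Lcomp|exact: L2_q].
have -> : nth (fun _ => 0) (rp_comps y (Clist t)) k \- rp_lincomb cb =
  (fun w => nth (fun _ => 0) (rp_comps y (Clist t)) k w - rp_lincomb cb w) by [].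
rewrite inner_subr //; last 2 first.
- exact: L2_comps.
- by apply: (@L2_lincomb _ _ _ P) => l; exact: L2_comps.
rewrite [X in _ = _ - X](_ : _ = 0) ?subr0 //.
rewrite /rp_lincomb inner_sumr //; last by move=> l; exact: L2_comps.
rewrite big1 // => l _.
by rewrite (q_projB t i).2 mulr0.
Qed.

Lemma B_in_C t : forall k : 'I_(size (rp_comps y (bl t))),
  exists k' : 'I_(size (rp_comps y (Clist t))),
  nth (fun _ => 0) (rp_comps y (bl t)) k = nth (fun _ => 0) (rp_comps y (Clist t)) k'.
Proof.
move=> [k hk0]; have hk : (k < K)%N by rewrite -(size_Bt t).
rewrite /= nth_Bt //.
have um : off k + t \in bl t.
  rewrite (bl_shift t); apply: (map_f (fun u => u + t)); exact: off_mem.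
have [j hj Hu] := @bl_in_C t _ hN um.
set v := t + (j.+1)%:Z.
have yuv : y (off k + t) = y v.
  by case: Hu => [-> //|Hu]; rewrite /v -Hu Hper.
have vm : (v, jj k) \in prs (Clist t).
  by rewrite mem_prs; apply/mapP; exists j; rewrite // mem_iota.
have hidx : (index (v, jj k) (prs (Clist t)) < size (rp_comps y (Clist t)))%N.
  by rewrite comps_map size_map index_mem.
exists (Ordinal hidx); rewrite /= comps_map (nth_map x0) ?index_mem //.
by rewrite nth_index // yuv.
Qed.

Lemma q_projE t i : rp_is_proj P (rp_comps y (Clist t)) (rp_comp (y t) i) (q t i).
Proof.
split; last exact: q_orthE.
apply: (@span_sub _ _ _ P _ _ _ (B_in_C t)); exact: (q_projB t i).1.
Qed.

Lemma q_ae t i : {ae P, forall w, q t i w = rp_comp (y t) i w - rp_comp (d t) i w}.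
Proof.
apply: (@proj_unique _ _ _ P (rp_comps y (Clist t)) (rp_comp (y t) i)).
- by move=> k; exact: L2_comps.
- exact: Lcomp.
- exact: q_projE.
- exact: Hconj.
Qed.

Definition Mq (z : int) : 'M[R]_m :=
  \matrix_(i, j) \sum_(l < K | (off l == - z) && (jj l == j)) cc i l.
Definition Fm (z : int) : 'M[R]_m := (z == 0)%:R%:M - Mq z.

Lemma off_ne0 (l : 'I_K) : off l != 0.
Proof. by have [] := @bl0_prop _ (@off_mem l (ltn_ord l)). Qed.

Lemma Fm0 : Fm 0 = 1%:M.
Proof.
rewrite /Fm eqxx (_ : Mq 0 = 0) ?subr0 //.
apply/matrixP => i j; rewrite !mxE big1 // => l /andP [/eqP h _].
by move: (off_ne0 l); rewrite h oppr0 eqxx.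
Qed.

Lemma partA t w (i : 'I_m) :
  (\sum_(k < (2 * n).+1) ((k%:Z - n%:Z == 0)%:R%:M *m y (t - (k%:Z - n%:Z)) w)) i 0 =
  rp_comp (y t) i w.
Proof.
rewrite summxE.
have hk0 : (n < (2 * n).+1)%N by lia.
rewrite (bigD1 (Ordinal hk0)) //= big1 ?addr0.
  by rewrite subrr eqxx mul_scalar_mx scale1r subr0.
move=> k hk; rewrite mul_scalar_mx mxE.
have -> : (k%:Z - n%:Z == 0) = false.
  apply/negbTE; move: hk; apply: contra => /eqP h.
  apply/eqP/val_inj => /=; lia.
by rewrite mul0r.
Qed.

Lemma partB t w (i : 'I_m) :
  (\sum_(k < (2 * n).+1) (Mq (k%:Z - n%:Z) *m y (t - (k%:Z - n%:Z)) w)) i 0 =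
  q t i w.
Proof.
rewrite summxE /q.
transitivity (\sum_(k < (2 * n).+1) \sum_(j < m) \sum_(l < K)
  (if (off l == - (k%:Z - n%:Z)) && (jj l == j)
   then cc i l * y (t - (k%:Z - n%:Z)) w j 0 else 0)).
  apply: eq_bigr => k _; rewrite mxE; apply: eq_bigr => j _.
  by rewrite mxE mulr_suml big_mkcond /=; apply: eq_bigr => l _; case: ifP.
rewrite exchange_big /=.
under eq_bigr do rewrite exchange_big /=.
rewrite exchange_big /=; apply: eq_bigr => l _.
have [oln0 /andP [ol1 ol2]] := @bl0_prop _ (@off_mem l (ltn_ord l)).
have hk0 : (absz (n%:Z - off l) < (2 * n).+1)%N by lia.
rewrite exchange_big /= (bigD1 (Ordinal hk0)) //= [X in _ + X]big1 ?addr0; last first.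
  move=> k hk; apply: big1 => j _.
  case: ifP => // /andP [/eqP h _]; exfalso; move/negP: hk; apply.
  by apply/eqP/val_inj => /=; lia.
rewrite (bigD1 (jj l)) //= [X in _ + X]big1 ?addr0; last first.
  by move=> j hj; rewrite [jj l == j]eq_sym (negbTE hj) andbF.
have -> : off l == - ((absz (n%:Z - off l))%:Z - n%:Z) by apply/eqP; lia.
rewrite eqxx /=; congr (_ * _).
have -> : t - ((absz (n%:Z - off l))%:Z - n%:Z) = off l + t by lia.
by [].
Qed.

Lemma AR_exists : two_sided_AR P n N y d Fm.
Proof.
move=> t _.
have HH : {ae P, forall w, forall i, q t i w = rp_comp (y t) i w - rp_comp (d t) i w}.
  by apply: filter_forall => i; exact: q_ae.
apply: filterS HH => w H.
apply/matrixP => i j; rewrite (ord1 j).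
have -> : \sum_(k < (2 * n).+1) Fm (k%:Z - n%:Z) *m y (t - (k%:Z - n%:Z)) w =
  \sum_(k < (2 * n).+1) ((k%:Z - n%:Z == 0)%:R%:M *m y (t - (k%:Z - n%:Z)) w) -
  \sum_(k < (2 * n).+1) (Mq (k%:Z - n%:Z) *m y (t - (k%:Z - n%:Z)) w).
  by rewrite -sumrB; apply: eq_bigr => k _; rewrite /Fm mulmxBl.
rewrite [LHS]mxE [X in _ + X]mxE partA partB (H i) /rp_comp.
by rewrite opprB addrC subrK.
Qed.

End Lists.

Section Uniq.
Context {d0 : measure_display} {T : measurableType d0} {R : realType}.
Variable P : probability T R.
Variables (m n N : nat) (y : int -> T -> 'cV[R]_m).
Hypotheses (hN : (2 * n < N)%N) (Hso : rp_second_order P y) (Hper : rp_periodic N y).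
Notation L2 := (Lfun P 2%:E).

Definition Zq (xs : 'I_N -> 'rV[R]_m) : T -> R :=
  fun w => \sum_(s < N) \sum_(a < m) xs s 0 a * rp_comp (y (s.+1)%:Z) a w.

Lemma inner_sum1 (I : Type) (r : seq I) (F : I -> T -> R) Y :
  (forall i, F i \in L2) -> Y \in L2 ->
  rp_inner P (fun w => \sum_(i <- r) F i w) Y = \sum_(i <- r) rp_inner P (F i) Y.
Proof.
move=> HF HY; have := @inner_sum _ _ _ P I r (fun _ => 1) F Y HF HY.
under eq_fun do under eq_bigr do rewrite mul1r.
by under eq_bigr do rewrite mul1r.
Qed.

Lemma L2_sum1 (I : Type) (r : seq I) (F : I -> T -> R) :
  (forall i, F i \in L2) -> (fun w => \sum_(i <- r) F i w) \in L2.
Proof.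
move=> HF; have := @L2_sum _ _ _ P I r (fun _ => 1) F HF.
by under eq_fun do under eq_bigr do rewrite mul1r.
Qed.

Lemma quad_form (xs : 'I_N -> 'rV[R]_m) :
  ((\mxrow_s xs s) *m rp_SigmaN P N y *m (\mxrow_s xs s)^T) 0 0 =
  rp_inner P (Zq xs) (Zq xs).
Proof.
have Lc : forall u a, rp_comp (y u) a \in L2 by move=> u a; exact: (Hso u a).1.
have LZ : Zq xs \in L2.
  apply: L2_sum1 => s; exact: L2_sum.
rewrite /rp_SigmaN mul_mxrow_mxblock tr_mxrow mul_mxrow_mxcol summxE.
rewrite {1}/Zq inner_sum1 //; last by move=> s; exact: L2_sum.
apply: eq_bigr => s _.
rewrite inner_sym inner_sum1 //; try (move=> ?); try exact: L2_sum.
rewrite mulmx_suml summxE; apply: eq_bigr => i _.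
rewrite inner_sum //; try exact: L2_sum.
rewrite mxE.
under eq_bigr do rewrite mxE mulr_suml.
rewrite exchange_big; apply: eq_bigr => a _ /=.
rewrite inner_sumr //; rewrite mulr_sumr; apply: eq_bigr => b _.
rewrite !mxE; ring.
Qed.


Definition sk (k : nat) : nat := if (k <= n)%N then (n - k)%N else (n + N - k)%N.

Lemma sk_lt (k : 'I_(2 * n).+1) : (sk k < N)%N.
Proof. have := ltn_ord k; rewrite /sk; case: ifP => h1 h2; lia. Qed.

Definition tau (k : 'I_(2 * n).+1) : 'I_N := Ordinal (sk_lt k).

Lemma tau_inj : injective tau.
Proof.
move=> k1 k2 /(congr1 val) /=; rewrite /sk => h; apply/val_inj => /=.
have := ltn_ord k1; have := ltn_ord k2.
by move: h; case: ifP => h1; case: ifP => h2 h3 h4 h5; lia.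
Qed.

Lemma y_tau (k : 'I_(2 * n).+1) : y ((tau k).+1)%:Z = y (1 - (k%:Z - n%:Z)).
Proof.
rewrite /= /sk; case: ifP => hk.
  by congr y; lia.
have -> : ((n + N - k).+1)%:Z = (1 - (k%:Z - n%:Z)) + N%:Z by have := ltn_ord k; lia.
by rewrite Hper.
Qed.


Lemma uniq_part (d : int -> T -> 'cV[R]_m) (F G : int -> 'M[R]_m) :
  rp_posdef (rp_SigmaN P N y) ->
  two_sided_AR P n N y d F -> two_sided_AR P n N y d G ->
  forall k : int, - n%:Z <= k <= n%:Z -> F k = G k.
Proof.
move=> Hpd ARF ARG z /andP [z1 z2].
have h1 : (1 : int) <= 1 <= N%:Z by apply/andP; split; lia.
have Hae : {ae P, forall w,
   \sum_(k < (2 * n).+1) F (k%:Z - n%:Z) *m y (1 - (k%:Z - n%:Z)) w =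
   \sum_(k < (2 * n).+1) G (k%:Z - n%:Z) *m y (1 - (k%:Z - n%:Z)) w}.
  by apply: (filterS2 _ _ (ARF 1 h1) (ARG 1 h1)) => w -> ->.
apply/matrixP => i0 j0; apply/eqP; apply: contraT => hne.
pose Hm (u : int) := F u - G u.
pose xs (s : 'I_N) : 'rV[R]_m :=
  \row_a \sum_(k < (2 * n).+1 | tau k == s) Hm (k%:Z - n%:Z) i0 a.
have HZ : {ae P, forall w, Zq xs w = 0}.
  apply: filterS Hae => w Hw.
  transitivity (\sum_(k < (2 * n).+1) \sum_(a < m)
      Hm (k%:Z - n%:Z) i0 a * rp_comp (y ((tau k).+1)%:Z) a w).
    rewrite /Zq [RHS](partition_big tau xpredT) //=; apply: eq_bigr => s _.
    rewrite exchange_big /=; apply: eq_bigr => a _; rewrite mxE mulr_suml.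
    by apply: eq_bigr => k /eqP <-.
  have := congr1 (fun M : 'cV[R]_m => M i0 0) Hw.
  move/eqP; rewrite -subr_eq0 => /eqP H0; rewrite -[RHS]H0.
  rewrite !summxE -sumrB; apply: eq_bigr => k _.
  rewrite !mxE -sumrB; apply: eq_bigr => a _.
  by rewrite y_tau /rp_comp /Hm !mxE mulrBl.
have hk0 : (absz (z + n%:Z)%R < (2 * n).+1)%N by lia.
pose k0 : 'I_(2 * n).+1 := Ordinal hk0.
have xne : \mxrow_s xs s != 0.
  apply/eqP => /(congr1 (fun M => submxrow M (tau k0))).
  rewrite mxrowK => /(congr1 (fun M : 'rV[R]_m => M 0 j0)).
  rewrite !mxE (big_pred1 k0); last by move=> k; rewrite /= (inj_eq tau_inj).
  have -> : (k0%:Z - n%:Z) = z by rewrite /= ; lia.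
  by rewrite /Hm !mxE => /eqP; rewrite subr_eq0 (negbTE hne).
have := Hpd _ xne; rewrite quad_form.
rewrite (@inner_ae _ _ _ P (Zq xs) (fun _ => 0) (Zq xs) HZ) inner0l.
by rewrite ltxx.
Qed.

End Uniq.

Local Close Scope classical_set_scope.

Theorem theorem1 (R : realType) (d0 : measure_display) (T : measurableType d0)
    (P : probability T R) (m n N : nat)
    (y d : int -> T -> 'cV[R]_m) :
  (1 <= m)%N -> (1 <= n)%N -> (2 * n < N)%N ->
  rp_second_order P y -> rp_periodic N y -> rp_stationary P y ->
  rp_reciprocal P n N y -> rp_conjugate P N y d ->
  (exists F : int -> 'M[R]_m, F 0 = 1%:M /\ two_sided_AR P n N y d F) /\
  (rp_posdef (rp_SigmaN P N y) ->
   forall F G : int -> 'M[R]_m,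
     F 0 = 1%:M -> two_sided_AR P n N y d F ->
     G 0 = 1%:M -> two_sided_AR P n N y d G ->
     forall k : int, - n%:Z <= k <= n%:Z -> F k = G k).
Proof.
move=> hm hn hN Hso Hper Hst Hrec Hconj; split.
  have [c Hc] := @ex_c d0 T R P m n y hm Hso.
  exists (@Fm d0 T R m n y hm c); split; first exact: Fm0.
  exact: (@AR_exists d0 T R P m n N y hm d hn hN Hso Hper Hst Hrec Hconj c Hc).
move=> Hpd F G _ ARF _ ARG.
exact: (@uniq_part d0 T R P m n N y hN Hso Hper d F G Hpd ARF ARG).
Qed.
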